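(* Consider the periodic one-dimensional finite-volume scheme defined in the context, with arbitrary real interface desired velocities $\mathbf{U}^n_i$, and assume that at every time step $n$ the CFL condition $\delta t<\frac12\,\frac{\delta x}{\max_i|\mathbf{U}^n_i|+\max_i|\mathbf{w}^n_i|}$ holds. If $0\le\rho^0_i\le1$ for all $i=1,\dots,N_x$, then $0\le\rho^n_i\le1$ for all $i$ and all $n\ge0$.
   Context: Grid: cells $i=1,\dots,N_x$ of width $\delta x$, indices taken modulo $N_x$ (periodic). Upwind flux: $A^{up}(u,\rho^-,\rho^+)=u\rho^-$ if $u>0$, $=u\rho^+$ if $u\le 0$. Given $\rho^n_i$ and interface velocities $\mathbf{U}^n_i$ (at interface $x_{i-1/2}$), the pressure $(p^n_i)$ is any periodic solution of $\frac{p^n_{i+1}-2p^n_i+p^n_{i-1}}{\delta x^2}=\frac1{\delta x}\big(A^{up}(\mathbf{U}^n_{i+1},\rho^n_i,\rho^n_{i+1})-A^{up}(\mathbf{U}^n_i,\rho^n_{i-1},\rho^n_i)\big)$, the correction velocity is $\mathbf{w}^n_i=-\frac{p^n_i-p^n_{i-1}}{\delta x}$, and the update is $\rho^{n+1}_i=\rho^n_i-\frac{\delta t}{\delta x}\big(A^{up}(\mathbf{U}^n_{i+1},\rho^n_i,\rho^n_{i+1})-A^{up}(\mathbf{U}^n_i,\rho^n_{i-1},\rho^n_i)\big)-\frac{\delta t}{\delta x}\big(A^{up}(\mathbf{w}^n_{i+1},\rho^n_i,\rho^n_{i+1})-A^{up}(\mathbf{w}^n_i,\rho^n_{i-1},\rho^n_i)\big)$.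 *)

(* Defs.v *)
From Stdlib Require Import Reals ZArith List.
Open Scope R_scope.

Definition Aup (u rm rp : R) : R := if Rlt_dec 0 u then u * rm else u * rp.

Definition periodic (N : nat) (f : Z -> R) : Prop :=
  forall i : Z, f (i + Z.of_nat N)%Z = f i.

Definition maxabs (N : nat) (f : Z -> R) : R :=
  fold_right Rmax 0 (map (fun k => Rabs (f (Z.of_nat k))) (seq 0 N)).

(* Correction velocity w_i = -(p_i - p_{i-1}) / dx, at interface x_{i-1/2}. *)
Definition wcorr (dx : R) (p : Z -> R) (i : Z) : R :=
  - ((p i - p (i - 1)%Z) / dx).

Definition fluxdiff (v rho : Z -> R) (i : Z) : R :=
  Aup (v (i + 1)%Z) (rho i) (rho (i + 1)%Z) - Aup (v i) (rho (i - 1)%Z) (rho i).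

(* Main.v *)
Require Import Defs.
From Stdlib Require Import Reals ZArith List Lra Lia Psatz.
Open Scope R_scope.

Definition pp (u : R) := if Rlt_dec 0 u then u else 0.
Definition mm (u : R) := if Rlt_dec 0 u then 0 else u.

Lemma Aup_pm u x y : Aup u x y = pp u * x + mm u * y.
Proof. unfold Aup, pp, mm; destruct (Rlt_dec 0 u); ring. Qed.

Lemma pp_b u M : -M <= u <= M -> 0 <= pp u <= M.
Proof. unfold pp; destruct (Rlt_dec 0 u); lra. Qed.
Lemma mm_b u M : -M <= u <= M -> -M <= mm u <= 0.
Proof. unfold mm; destruct (Rlt_dec 0 u); lra. Qed.

Lemma step_pos l a b c U0 U1 w0 w1 MU Mw :
  0 <= l -> 0 <= a -> 0 <= b -> 0 <= c ->
  -MU <= U0 <= MU -> -MU <= U1 <= MU -> -Mw <= w0 <= Mw -> -Mw <= w1 <= Mw ->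
  2 * l * (MU + Mw) <= 1 ->
  0 <= b - l * (Aup U1 b c - Aup U0 a b) - l * (Aup w1 b c - Aup w0 a b).
Proof.
  intros. rewrite !Aup_pm.
  pose proof (pp_b _ _ H3). pose proof (pp_b _ _ H4).
  pose proof (pp_b _ _ H5). pose proof (pp_b _ _ H6).
  pose proof (mm_b _ _ H3). pose proof (mm_b _ _ H4).
  pose proof (mm_b _ _ H5). pose proof (mm_b _ _ H6).
  replace (b - l * (pp U1 * b + mm U1 * c - (pp U0 * a + mm U0 * b)) -
     l * (pp w1 * b + mm w1 * c - (pp w0 * a + mm w0 * b)))
   with (b * (1 - l * (pp U1 - mm U0 + pp w1 - mm w0)) + (l * pp U0) * a
         + (l * (- mm U1)) * c + (l * pp w0) * a + (l * (- mm w1)) * c) by ring.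
  assert (0 <= 1 - l * (pp U1 - mm U0 + pp w1 - mm w0)).
  { assert (l * (pp U1 - mm U0 + pp w1 - mm w0) <= l * (2 * (MU + Mw))).
    apply Rmult_le_compat_l; lra. lra. }
  repeat apply Rplus_le_le_0_compat; apply Rmult_le_pos; try apply Rmult_le_pos; lra.
Qed.

Lemma per_nat N f : periodic N f -> forall (k : nat) i, f (i + Z.of_nat k * Z.of_nat N)%Z = f i.
Proof.
  intros H k; induction k; intros i.
  - f_equal; lia.
  - rewrite <- (IHk i), <- (H (i + Z.of_nat k * Z.of_nat N)%Z). f_equal; lia.
Qed.

Lemma per_Z N f : periodic N f -> forall (k : Z) i, f (i + k * Z.of_nat N)%Z = f i.
Proof.
  intros H k i. destruct (Z_le_gt_dec 0 k).
  - replace k with (Z.of_nat (Z.to_nat k)) by lia. apply per_nat; auto.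
  - rewrite <- (per_nat N f H (Z.to_nat (-k)) (i + k * Z.of_nat N)). f_equal; lia.
Qed.

Lemma per_mod N f : (0 < N)%nat -> periodic N f -> forall i, f i = f (i mod Z.of_nat N)%Z.
Proof.
  intros HN H i. rewrite <- (per_Z N f H (i / Z.of_nat N) (i mod Z.of_nat N)%Z).
  f_equal. assert (Z.of_nat N <> 0%Z) by lia. pose proof (Z.div_mod i (Z.of_nat N) H0). lia.
Qed.

Lemma mod_range N i : (0 < N)%nat -> (0 <= i mod Z.of_nat N < Z.of_nat N)%Z.
Proof. intros; apply Z.mod_pos_bound; lia. Qed.

Lemma fold_max_ge x l : In x l -> x <= fold_right Rmax 0 l.
Proof.
  induction l; simpl; [tauto|]; intros [->|Hi].
  - apply Rmax_l.
  - eapply Rle_trans; [apply IHl; auto | apply Rmax_r].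
Qed.

Lemma maxabs_ge N f : (0 < N)%nat -> periodic N f -> forall i, Rabs (f i) <= maxabs N f.
Proof.
  intros HN H i. rewrite (per_mod N f HN H). unfold maxabs.
  apply fold_max_ge. pose proof (mod_range N i HN).
  replace (i mod Z.of_nat N)%Z with (Z.of_nat (Z.to_nat (i mod Z.of_nat N))) by lia.
  apply (in_map (fun k => Rabs (f (Z.of_nat k)))). apply in_seq. lia.
Qed.

Lemma abs_bd x M : Rabs x <= M -> -M <= x <= M.
Proof. unfold Rabs; destruct (Rcase_abs x); lra. Qed.

Theorem mainTheorem5
  (N : nat) (dx dt : R)
  (rho U p : nat -> Z -> R)
  (HN : (0 < N)%nat) (Hdx : 0 < dx) (Hdt : 0 < dt)
  (Hrho0per : periodic N (rho 0%nat))
  (HUper : forall n, periodic N (U n))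
  (Hpper : forall n, periodic N (p n))
  (Hpoisson : forall (n : nat) (i : Z),
      (p n (i + 1)%Z - 2 * p n i + p n (i - 1)%Z) / (dx ^ 2)
      = (1 / dx) * fluxdiff (U n) (rho n) i)
  (Hupdate : forall (n : nat) (i : Z),
      rho (S n) i = rho n i - dt / dx * fluxdiff (U n) (rho n) i
                            - dt / dx * fluxdiff (wcorr dx (p n)) (rho n) i)
  (HCFL : forall n : nat,
      2 * dt * (maxabs N (U n) + maxabs N (wcorr dx (p n))) < dx)
  (Hinit : forall i : Z, (0 <= i < Z.of_nat N)%Z -> 0 <= rho 0%nat i <= 1) :
  forall (n : nat) (i : Z), (0 <= i < Z.of_nat N)%Z -> 0 <= rho n i <= 1.
Proof.
  assert (Main : forall n, periodic N (rho n) /\ forall i, 0 <= rho n i <= 1).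
  { induction n.
    - split; auto. intro i. rewrite (per_mod N _ HN Hrho0per). apply Hinit, mod_range; auto.
    - destruct IHn as [Hp Hb].
      assert (wper : periodic N (wcorr dx (p n))).
      { intro i; unfold wcorr.
        replace (i + Z.of_nat N - 1)%Z with ((i - 1) + Z.of_nat N)%Z by lia.
        rewrite !Hpper. reflexivity. }
      split.
      + intro i. rewrite !Hupdate. unfold fluxdiff.
        replace (i + Z.of_nat N + 1)%Z with ((i + 1) + Z.of_nat N)%Z by lia.
        replace (i + Z.of_nat N - 1)%Z with ((i - 1) + Z.of_nat N)%Z by lia.
        rewrite !Hp, !HUper, !wper. reflexivity.
      + intro i.
        set (l := dt / dx).
        assert (Hl : 0 <= l) by (unfold l; apply Rlt_le, Rdiv_lt_0_compat; lra).
        assert (HC : 2 * l * (maxabs N (U n) + maxabs N (wcorr dx (p n))) <= 1).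
        { pose proof (HCFL n). unfold l.
          apply Rmult_le_reg_r with dx; auto.
          replace (2 * (dt / dx) * (maxabs N (U n) + maxabs N (wcorr dx (p n))) * dx)
            with (2 * dt * (maxabs N (U n) + maxabs N (wcorr dx (p n)))) by (field; lra).
          lra. }
        pose proof (fun j => abs_bd _ _ (maxabs_ge N (U n) HN (HUper n) j)) as BU.
        pose proof (fun j => abs_bd _ _ (maxabs_ge N _ HN wper j)) as BW.
        assert (HF : fluxdiff (U n) (rho n) i
                     = - (wcorr dx (p n) (i + 1)%Z - wcorr dx (p n) i)).
        { assert (E : fluxdiff (U n) (rho n) i = dx * ((1/dx) * fluxdiff (U n) (rho n) i))
            by (field; lra).
          rewrite E, <- Hpoisson. unfold wcorr.
          replace (i + 1 - 1)%Z with i by lia. field; lra. }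
        split.
        * rewrite Hupdate. fold l. unfold fluxdiff.
          apply step_pos with (maxabs N (U n)) (maxabs N (wcorr dx (p n))); auto;
            apply Hb.
        * assert (E : 1 - rho (S n) i =
            (1 - rho n i) - l * (Aup 0 (1 - rho n i) (1 - rho n (i+1)%Z)
                                 - Aup 0 (1 - rho n (i-1)%Z) (1 - rho n i))
            - l * (Aup (wcorr dx (p n) (i + 1)%Z) (1 - rho n i) (1 - rho n (i+1)%Z)
                   - Aup (wcorr dx (p n) i) (1 - rho n (i-1)%Z) (1 - rho n i))).
          { rewrite Hupdate, HF. fold l. unfold fluxdiff. rewrite !Aup_pm. unfold pp, mm.
            destruct (Rlt_dec 0 (wcorr dx (p n) (i + 1)%Z));
            destruct (Rlt_dec 0 (wcorr dx (p n) i)); destruct (Rlt_dec 0 0); ring. }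
          cut (0 <= 1 - rho (S n) i). lra.
          rewrite E.
          assert (0 <= maxabs N (U n)) by (pose proof (maxabs_ge N (U n) HN (HUper n) 0%Z);
                                           pose proof (Rabs_pos (U n 0%Z)); lra).
          apply step_pos with (maxabs N (U n)) (maxabs N (wcorr dx (p n))); auto;
            try (pose proof (Hb (i-1)%Z); pose proof (Hb i); pose proof (Hb (i+1)%Z); lra);
            lra. }
  intros n i _. apply Main.
Qed.
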